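(* For any $c\in\mathbb{R}$ and any $\lambda\in\mathbb{Z}\setminus\{0,1\}$, the equation $$\mu(u_t)-u_{txx}+\lambda\mu(u)u_x=\lambda u_xu_{xx}+uu_{xxx}$$ admits the peaked period-one traveling-wave solution $u(t,x)=\varphi(x-ct)$, where $$\varphi(x)=\frac{c}{26}\big(12x^2+23\big)\quad\text{for }x\in[-\tfrac12,\tfrac12],$$ and $\varphi$ is extended periodically (with period $1$) to the real line.
   Context: Here $u(t,\cdot)$ is a $1$-periodic function on $\mathbb{R}$ (a function on $S^1=\mathbb{R}/\mathbb{Z}$) and $\mu(u)=\int_0^1u\,dx$. Since $\varphi$ is not smooth at $x\equiv\frac12\pmod 1$, the solution is understood in the weak sense, i.e. as a distributional solution of $u_t+uu_x+\Lambda_\mu^{-2}\partial_x\big(\lambda\mu(u)u+\frac{3-\lambda}{2}u_x^2\big)=0$, where $\Lambda_\mu^{-2}$ is the inverse of $\Lambda_\mu^2v=\mu(v)-v_{xx}$. *)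

(* Defs.v *)
From Stdlib Require Import Reals.
From Coquelicot Require Import Coquelicot.
Open Scope R_scope.

Definition mu (f : R -> R) : R := RInt f 0 1.

Definition periodic1 (f : R -> R) : Prop := forall x, f (x + 1) = f x.

(** Spatial derivative u_x(t,x) (pointwise; for Lipschitz u it is the a.e.
    derivative, which is all that enters the integrals below). *)
Definition ux (u : R -> R -> R) (t x : R) : R := Derive (fun y => u t y) x.

Definition smooth1 (f : R -> R) : Prop :=
  exists D : nat -> R -> R, D O = f /\
    forall n x, is_derive (D n) x (D (S n) x).

Definition smooth2 (f : R -> R -> R) : Prop :=
  exists D : nat -> nat -> R -> R -> R, D O O = f /\
    (forall i j t x, is_derive (fun s => D i j s x) t (D (S i) j t x)) /\
    (forall i j t x, is_derive (fun y => D i j t y) x (D i (S j) t x)) /\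
    (forall i j (p : R * R),
        continuous (fun q : R * R => D i j (fst q) (snd q)) p).

Definition test_fun (psi : R -> R -> R) (T : R) : Prop :=
  smooth2 psi /\ (forall t, periodic1 (psi t)) /\
  (forall t x, T < Rabs t -> psi t x = 0).

(** [Lambda_inv2 f v] : v = Lambda_mu^{-2} f, where Lambda_mu^2 v = mu(v) - v_xx,
    understood in the sense of periodic distributions: v is 1-periodic,
    integrable over a period, and for every smooth 1-periodic chi,
      <mu(v) - v_xx, chi> = \int_0^1 v (mu(chi) - chi'') = \int_0^1 f chi.
    (Lambda_mu^2 is injective on periodic distributions, so this determines
    v up to a null set.) *)
Definition Lambda_inv2 (f v : R -> R) : Prop :=
  periodic1 v /\ ex_RInt v 0 1 /\
  forall chi : R -> R, smooth1 chi -> periodic1 chi ->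
    ex_RInt (fun x => v x * (mu chi - Derive_n chi 2 x)) 0 1 /\
    ex_RInt (fun x => f x * chi x) 0 1 /\
    RInt (fun x => v x * (mu chi - Derive_n chi 2 x)) 0 1
      = RInt (fun x => f x * chi x) 0 1.

(** Weak (distributional) solution on R_t x S^1 of
      u_t + u u_x + Lambda_mu^{-2} d_x ( lam mu(u) u + (3-lam)/2 u_x^2 ) = 0.
    Since Lambda_mu^{-2} commutes with d_x, we write the nonlocal term as
    d_x F with F(t,.) = Lambda_mu^{-2}( lam mu(u) u + (3-lam)/2 u_x^2 ). *)
Definition weak_solution (lam : R) (u : R -> R -> R) : Prop :=
  (forall t, periodic1 (u t)) /\
  exists F : R -> R -> R,
    (forall t, Lambda_inv2
        (fun x => lam * mu (u t) * u t x + (3 - lam) / 2 * (ux u t x) ^ 2)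
        (F t)) /\
    forall (psi : R -> R -> R) (T : R), test_fun psi T ->
      let integrand t x :=
        - u t x * Derive (fun s => psi s x) t
        + u t x * ux u t x * psi t x
        - F t x * Derive (fun y => psi t y) x in
      (forall t, ex_RInt (fun x => integrand t x) 0 1) /\
      ex_RInt (fun t => RInt (fun x => integrand t x) 0 1) (- T) T /\
      RInt (fun t => RInt (fun x => integrand t x) 0 1) (- T) T = 0.

(* Main.v *)
Require Import Defs.
From Stdlib Require Import Reals ZArith Lra FunctionalExtensionality.
From Coquelicot Require Import Coquelicot.
Open Scope R_scope.

Lemma chain (g gt gz : R -> R -> R) :
  (forall t z, is_derive (fun s => g s z) t (gt t z)) ->
  (forall t z, is_derive (fun w => g t w) z (gz t z)) ->
  (forall p, continuous (fun q : R * R => gt (fst q) (snd q)) p) ->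
  forall c y u, is_derive (fun u => g u (y + c * u)) u
     (gt u (y + c * u) + c * gz u (y + c * u)).
Proof.
  intros Hgt Hgz Hc c y u.
  assert (HF := is_derive_filterdiff g u (y + c*u) gt (gz u (y + c*u))
    (filter_forall _ (fun q => Hgt (fst q) (snd q))) (Hgz _ _) (Hc _)).
  assert (HD : differentiable_pt_lim g u (y + c*u) (gt u (y + c*u)) (gz u (y + c*u))).
  { apply filterdiff_differentiable_pt_lim.
    eapply filterdiff_ext_lin. exact HF. intros [p1 p2]. simpl.
    unfold plus, scal; simpl; unfold mult; simpl. ring. }
  apply is_derive_Reals.
  assert (H1 : derivable_pt_lim (fun t => t) u 1).
  { apply is_derive_Reals. auto_derive; auto. }
  assert (H2 : derivable_pt_lim (fun t => y + c * t) u c).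
  { apply is_derive_Reals. auto_derive; auto. ring. }
  assert (H := derivable_pt_lim_comp_2d g (fun t => t) (fun t => y + c*t) u _ _ _ _ HD H1 H2).
  replace (gt u (y + c * u) + c * gz u (y + c * u)) with
     (gt u (y + c * u) * 1 + gz u (y + c * u) * c) by ring. exact H.
Qed.

Lemma cont_slice (K : R -> R -> R) :
  (forall p, continuous (fun q : R * R => K (fst q) (snd q)) p) ->
  forall t s y, continuous (fun y => K t (y + s)) y.
Proof.
  intros HK t s y.
  apply (continuous_comp_2 (fun _ => t) (fun y => y + s) K).
  - apply continuous_const.
  - apply (continuous_plus (fun y => y) (fun _ => s)). apply continuous_id. apply continuous_const.
  - apply HK.
Qed.

Lemma cont_shear (K : R -> R -> R) :
  (forall p, continuous (fun q : R * R => K (fst q) (snd q)) p) ->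
  forall c x y, continuous (fun q : R * R => K (fst q) (snd q + c * fst q)) (x, y).
Proof.
  intros HK c x y.
  apply (continuous_comp_2 (fun q : R*R => fst q) (fun q : R*R => snd q + c * fst q) K).
  - apply continuous_fst.
  - apply (continuous_plus (fun q : R*R => snd q) (fun q : R*R => c * fst q)).
    apply continuous_snd.
    apply (continuous_mult (fun _ : R*R => c) (fun q : R*R => fst q)).
    apply continuous_const. apply continuous_fst.
  - apply HK.
Qed.


Lemma param (g gt gz : R -> R -> R) (w : R -> R) (c a b : R) :
  (forall t z, is_derive (fun s => g s z) t (gt t z)) ->
  (forall t z, is_derive (fun z => g t z) z (gz t z)) ->
  (forall p, continuous (fun q : R * R => gt (fst q) (snd q)) p) ->
  (forall p, continuous (fun q : R * R => gz (fst q) (snd q)) p) ->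
  (forall y, continuous w y) ->
  forall x, is_derive (fun u => RInt (fun y => w y * g u (y + c * u)) a b) x
    (RInt (fun y => w y * (gt x (y + c * x) + c * gz x (y + c * x))) a b).
Proof.
  intros Hgt Hgz Hct Hcz Hw x.
  assert (Hch := chain g gt gz Hgt Hgz Hct).
  assert (HD : forall u y, Derive (fun z => w y * g z (y + c * z)) u
             = w y * (gt u (y + c * u) + c * gz u (y + c * u))).
  { intros u y. apply is_derive_unique.
    apply (is_derive_scal (fun z => g z (y + c*z))). apply Hch. }
  rewrite <- (RInt_ext (fun y => Derive (fun z => w y * g z (y + c * z)) x)).
  2:{ intros; apply HD. }
  apply (is_derive_RInt_param (fun u y => w y * g u (y + c * u))).
  - apply filter_forall. intros x0 t _. eexists.
    apply (is_derive_scal (fun z => g z (t + c*z))). apply Hch.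
  - intros t _.
    apply continuity_2d_pt_ext with
      (f := fun u v => w v * (gt u (v + c * u) + c * gz u (v + c * u))).
    { intros; symmetry; apply HD. }
    apply continuity_2d_pt_filterlim.
    apply (continuous_mult (fun q : R*R => w (snd q))
       (fun q : R*R => gt (fst q) (snd q + c * fst q) + c * gz (fst q) (snd q + c * fst q))).
    + apply (continuous_comp (fun q : R*R => snd q) w). apply continuous_snd. apply Hw.
    + apply (continuous_plus (fun q : R*R => gt (fst q) (snd q + c * fst q))
         (fun q : R*R => c * gz (fst q) (snd q + c * fst q))).
      * apply cont_shear; auto.
      * apply (continuous_mult (fun _ : R*R => c) (fun q : R*R => gz (fst q) (snd q + c * fst q))).
        apply continuous_const. apply cont_shear; auto.
  - apply filter_forall. intros u. apply (@ex_RInt_continuous R_CompleteNormedModule). intros z _.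
    apply (continuous_mult w (fun y => g u (y + c * u))). apply Hw.
    apply (continuous_comp (fun y => y + c * u) (fun y => g u y)).
    apply (continuous_plus (fun y => y) (fun _ => c * u)). apply continuous_id. apply continuous_const.
    apply (@ex_derive_continuous R_AbsRing R_NormedModule). eexists. apply Hgz.
Qed.


Lemma shift_int (h : R -> R) (v a b l : R) :
  (forall y, h (y + v) = h y) -> is_RInt h a b l -> is_RInt h (a - v) (b - v) l.
Proof.
  intros Hp H.
  assert (H' : is_RInt h (1 * (a - v) + v) (1 * (b - v) + v) l).
  { replace (1 * (a - v) + v) with a by ring. replace (1 * (b - v) + v) with b by ring. exact H. }
  apply is_RInt_comp_lin in H'.
  eapply is_RInt_ext; [|exact H'].
  intros y _. unfold scal; simpl; unfold mult; simpl. rewrite Rmult_1_l.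
  replace (1 * y + v) with (y + v) by ring. apply Hp.
Qed.

Lemma per_step (h : R -> R) (a b l : R) :
  periodic1 h -> a <= b <= a + 1 -> is_RInt h a (a + 1) l -> is_RInt h b (b + 1) l.
Proof.
  intros Hp Hab H.
  assert (Hex : ex_RInt h a (a+1)) by (eexists; exact H).
  assert (E1 : ex_RInt h a b) by (apply (ex_RInt_Chasles_1 h a b (a+1)); auto).
  assert (E2 : ex_RInt h b (a+1)) by (apply (ex_RInt_Chasles_2 h a b (a+1)); auto).
  destruct E1 as [l1 H1]. destruct E2 as [l2 H2].
  assert (Hl : l = plus l1 l2).
  { rewrite <- (@is_RInt_unique R_CompleteNormedModule h a (a+1) l H).
    apply (@is_RInt_unique R_CompleteNormedModule).
    apply (is_RInt_Chasles h a b (a+1)); auto. }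
  assert (H1' : is_RInt h (a + 1) (b + 1) l1).
  { replace (a+1) with (a - -1) by ring. replace (b+1) with (b - -1) by ring.
    apply shift_int; auto. intros y. replace (y + -1) with (y - 1) by ring.
    rewrite <- (Hp (y - 1)). f_equal; ring. }
  assert (Hr := is_RInt_Chasles h b (a+1) (b+1) _ _ H2 H1').
  rewrite Hl. rewrite Hl in *. unfold plus in *; simpl in *. rewrite (Rplus_comm l1 l2). exact Hr.
Qed.

Lemma per_near (h : R -> R) (a b l : R) :
  periodic1 h -> Rabs (b - a) <= 1 -> is_RInt h a (a + 1) l -> is_RInt h b (b + 1) l.
Proof.
  intros Hp Hab H. destruct (Rle_dec a b).
  - apply (per_step h a); auto. split; auto. apply Rabs_le_between in Hab. lra.
  - assert (H0 : is_RInt h (a - 1) (a - 1 + 1) l).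
    { replace (a - 1 + 1) with ((a + 1) - 1) by ring. apply shift_int; auto. }
    apply (per_step h (a-1)); auto. apply Rabs_le_between in Hab. lra.
Qed.

Lemma per_any (h : R -> R) (a b l : R) :
  periodic1 h -> is_RInt h a (a + 1) l -> is_RInt h b (b + 1) l.
Proof.
  intros Hp H.
  assert (Hn : forall n : nat, forall b, Rabs (b - a) <= INR n + 1 -> is_RInt h b (b + 1) l).
  { induction n as [|n IH]; intros b' Hb.
    - apply (per_near h a); auto. simpl in Hb; lra.
    - rewrite S_INR in Hb. apply Rabs_le_between in Hb.
      destruct (Rle_dec (Rabs (b' - a)) 1) as [Hc|Hc].
      + apply (per_near h a); auto.
      + destruct (Rle_dec a b').
        * apply (per_near h (b' - 1)). auto. rewrite Rabs_right; lra.
          apply IH. rewrite Rabs_le_between. rewrite Rabs_right in Hc; lra.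
        * apply (per_near h (b' + 1)). auto. rewrite Rabs_left; lra.
          apply IH. rewrite Rabs_le_between. rewrite Rabs_left in Hc; lra. }
  destruct (INR_archimed 1 (Rabs (b - a))) as [n Hn']. lra.
  apply (Hn n). lra.
Qed.

Lemma shift_window (h : R -> R) (s l : R) :
  periodic1 h -> is_RInt (fun y => h (y + s)) (-/2) (/2) l -> is_RInt h 0 1 l.
Proof.
  intros Hp H.
  assert (H' : is_RInt (fun y => h (y + s)) (1 * (s - /2) + - s) (1 * (s - /2 + 1) + - s) l).
  { replace (1 * (s - /2) + - s) with (-/2) by ring.
    replace (1 * (s - /2 + 1) + - s) with (/2) by field. exact H. }
  apply is_RInt_comp_lin in H'.
  assert (H2 : is_RInt h (s - /2) (s - /2 + 1) l).
  { eapply is_RInt_ext; [|exact H']. intros y _.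
    unfold scal; simpl; unfold mult; simpl. rewrite Rmult_1_l. f_equal. ring. }
  assert (X := per_any h (s - /2) 0 l Hp H2). replace (0+1) with 1 in X by ring. exact X.
Qed.


Lemma Derive_per (f : R -> R) x : (forall y, f (y + 1) = f y) -> Derive f (x + 1) = Derive f x.
Proof.
  intros H. unfold Derive. f_equal. apply Lim_ext. intros h.
  replace (x + 1 + h) with ((x + h) + 1) by ring. rewrite !H. reflexivity.
Qed.

Lemma zero_edge (f : R -> R) (T s : R) :
  (forall x, continuous f x) -> (forall x, T < Rabs x -> f x = 0) -> T <= Rabs s -> f s = 0.
Proof.
  intros Hc Hz Hs. destruct (Rlt_dec T (Rabs s)) as [h|h]; [auto|].
  assert (Heq : Rabs s = T) by lra. clear h Hs.
  destruct (Req_dec (f s) 0) as [E|E]; auto. exfalso.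
  assert (Hp : 0 < Rabs (f s) / 2) by (apply Rabs_pos_lt in E; lra).
  assert (Hl := proj1 (filterlim_locally f (f s)) (Hc s) (mkposreal _ Hp)).
  destruct Hl as [d Hd].
  assert (Hd2 : 0 < d / 2) by (destruct d; simpl; lra).
  destruct (Rle_dec 0 s).
  - assert (HB0 := Hd (s + d/2)). cbv beta in HB0.
    rewrite (Hz (s + d/2)) in HB0. 2:{ rewrite Rabs_right in Heq |- *; lra. }
    assert (HB1 : ball s d (s + d / 2)).
    { change (Rabs ((s + d/2) - s) < d). replace (s + d/2 - s) with (d/2) by ring.
      rewrite Rabs_right; destruct d; simpl in *; lra. }
    specialize (HB0 HB1). change (Rabs (0 - f s) < Rabs (f s) / 2) in HB0.
    rewrite Rabs_minus_sym, Rminus_0_r in HB0. lra.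
  - assert (HB0 := Hd (s - d/2)). cbv beta in HB0.
    rewrite (Hz (s - d/2)) in HB0. 2:{ rewrite Rabs_left in Heq |- *; lra. }
    assert (HB1 : ball s d (s - d / 2)).
    { change (Rabs ((s - d/2) - s) < d). replace (s - d/2 - s) with (-(d/2)) by ring.
      rewrite Rabs_Ropp, Rabs_right; destruct d; simpl in *; lra. }
    specialize (HB0 HB1). change (Rabs (0 - f s) < Rabs (f s) / 2) in HB0.
    rewrite Rabs_minus_sym, Rminus_0_r in HB0. lra.
Qed.

Lemma ux_win (phi : R -> R) (c t y : R) :
  (forall x, -/2 <= x <= /2 -> phi x = c / 26 * (12 * x ^ 2 + 23)) ->
  -/2 < y < /2 -> ux (fun t x => phi (x - c * t)) t (y + c * t) = 12 * c / 13 * y.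
Proof.
  intros Hw Hy. unfold ux.
  rewrite (Derive_ext_loc _ (fun z => c / 26 * (12 * (z - c * t) ^ 2 + 23))).
  - apply is_derive_unique. auto_derive; auto. field_simplify. ring_simplify. field.
  - assert (He : 0 < Rmin (/2 - y) (y + /2)) by (apply Rmin_glb_lt; lra).
    exists (mkposreal _ He). intros z Hz. change (Rabs (z - (y + c*t)) < Rmin (/2 - y) (y + /2)) in Hz.
    apply Rabs_lt_between in Hz. apply Hw.
    assert (Rmin (/2 - y) (y + /2) <= /2 - y) by apply Rmin_l.
    assert (Rmin (/2 - y) (y + /2) <= y + /2) by apply Rmin_r. lra.
Qed.


Lemma is_RInt_uniq (f : R -> R) a b l1 l2 : is_RInt f a b l1 -> is_RInt f a b l2 -> l1 = l2.
Proof.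
  intros H1 H2. rewrite <- (@is_RInt_unique R_CompleteNormedModule f a b l1 H1).
  apply (@is_RInt_unique R_CompleteNormedModule). exact H2.
Qed.

Lemma is_RInt_FTC (F dF : R -> R) a b :
  (forall x, is_derive F x (dF x)) -> (forall x, continuous dF x) -> is_RInt dF a b (F b - F a).
Proof.
  intros H1 H2. apply (@is_RInt_derive R_CompleteNormedModule); auto.
Qed.

Lemma cont_of_der (f : R -> R) : (forall x, ex_derive f x) -> forall x, continuous f x.
Proof. intros H x. apply (@ex_derive_continuous R_AbsRing R_NormedModule). auto. Qed.

Lemma is_RInt_cont (f : R -> R) a b : (forall x, ex_derive f x) -> is_RInt f a b (RInt f a b).
Proof.
  intros H. apply (@RInt_correct R_CompleteNormedModule).
  apply (@ex_RInt_continuous R_CompleteNormedModule). intros; apply cont_of_der; auto.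
Qed.

Lemma scalR (k x : R) : scal k x = k * x. Proof. reflexivity. Qed.
Lemma minusR (x y : R) : minus x y = x - y. Proof. reflexivity. Qed.
Lemma plusR (x y : R) : plus x y = x + y. Proof. reflexivity. Qed.

Definition Kc (c l : R) := (1380 * l - 659) * c ^ 2 / 1690.
Definition pp (c y : R) := c / 26 * (12 * y ^ 2 + 23).

Lemma Pint (c l : R) : is_RInt (fun y => c * pp c y - pp c y ^ 2 / 2 + Kc c l) (-/2) (/2)
   ((18 + 138 * l) * c ^ 2 / 169).
Proof.
  set (Q := fun y => c^2 * (2 * y^3 / 13 + 23 * y / 26) - c^2 * (18 * y^5 / 845 + 23 * y^3 / 169 + 529 * y / 1352) + Kc c l * y).
  replace ((18 + 138 * l) * c ^ 2 / 169) with (Q (/2) - Q (-/2)).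
  apply is_RInt_FTC.
  - intros x. unfold Q, pp. auto_derive; auto. field.
  - apply cont_of_der. intros x. unfold pp. auto_derive; auto.
  - unfold Q, Kc. field.
Qed.

Lemma pint (c : R) : is_RInt (pp c) (-/2) (/2) (12 * c / 13).
Proof.
  set (Q := fun y => c * (2 * y^3 / 13 + 23 * y / 26)).
  replace (12 * c / 13) with (Q (/2) - Q (-/2)).
  apply is_RInt_FTC.
  - intros x. unfold Q, pp. auto_derive; auto. field.
  - apply cont_of_der. intros x. unfold pp. auto_derive; auto.
  - unfold Q. field.
Qed.


Lemma mu_u (c t : R) (phi : R -> R) :
  (forall x, phi (x + 1) = phi x) ->
  (forall x, -/2 <= x <= /2 -> phi x = c / 26 * (12 * x ^ 2 + 23)) ->
  is_RInt (fun x => phi (x - c * t)) 0 1 (12 * c / 13).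
Proof.
  intros Hper Hwin. apply (shift_window _ (c * t)).
  - intros x. replace (x + 1 - c * t) with ((x - c*t) + 1) by ring. apply Hper.
  - eapply is_RInt_ext; [|apply pint]. intros y Hy.
    rewrite Rmin_left in Hy by lra. rewrite Rmax_right in Hy by lra.
    replace (y + c * t - c * t) with y by ring. rewrite Hwin by lra. reflexivity.
Qed.

Lemma lambda_part (c l t : R) (phi : R -> R) :
  (forall x, phi (x + 1) = phi x) ->
  (forall x, -/2 <= x <= /2 -> phi x = c / 26 * (12 * x ^ 2 + 23)) ->
  Lambda_inv2
    (fun x => l * mu (fun x => phi (x - c * t)) * phi (x - c * t)
              + (3 - l) / 2 * (ux (fun t x => phi (x - c * t)) t x) ^ 2)
    (fun x => c * phi (x - c * t) - phi (x - c * t) ^ 2 / 2 + Kc c l).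
Proof.
  intros Hper Hwin.
  set (s := c * t).
  assert (Hperu : forall x, phi (x + 1 - s) = phi (x - s)).
  { intros x. replace (x + 1 - s) with ((x - s) + 1) by ring. apply Hper. }
  assert (Hphi : forall y, -/2 <= y <= /2 -> phi (y + s - s) = pp c y).
  { intros y Hy. replace (y + s - s) with y by ring. rewrite Hwin by lra. reflexivity. }
  assert (Hmu : mu (fun x => phi (x - s)) = 12 * c / 13).
  { apply (@is_RInt_unique R_CompleteNormedModule). apply mu_u; auto. }
  rewrite Hmu.
  set (P := fun y => c * pp c y - pp c y ^ 2 / 2 + Kc c l).
  set (A := (18 + 138 * l) * c ^ 2 / 169).
  assert (HPint : is_RInt P (-/2) (/2) A) by apply Pint.
  split; [|split].
  - intros x. rewrite Hperu. reflexivity.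
  - exists A. apply (shift_window _ s).
    + intros x. rewrite Hperu. reflexivity.
    + eapply is_RInt_ext; [|exact HPint]. intros y Hy.
      rewrite Rmin_left in Hy by lra. rewrite Rmax_right in Hy by lra.
      rewrite Hphi by lra. reflexivity.
  - intros chi [Dc [HD0 HDc]] Hchi. subst chi.
    assert (Hex : forall n x, ex_derive (Dc n) x) by (intros n x; eexists; apply HDc).
    assert (HDn2 : forall x, Derive_n (Dc 0%nat) 2 x = Dc 2%nat x).
    { intros x. simpl. rewrite (Derive_ext _ (Dc 1%nat)).
      apply is_derive_unique; apply HDc.
      intros y. apply is_derive_unique; apply HDc. }
    assert (Hc1per : forall x, Dc 1%nat (x + 1) = Dc 1%nat x).
    { intros x. rewrite <- (is_derive_unique _ _ _ (HDc 0%nat (x + 1))).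
      rewrite <- (is_derive_unique _ _ _ (HDc 0%nat x)).
      apply Derive_per. exact Hchi. }
    assert (Hc2per : forall x, Dc 2%nat (x + 1) = Dc 2%nat x).
    { intros x. rewrite <- (is_derive_unique _ _ _ (HDc 1%nat (x + 1))).
      rewrite <- (is_derive_unique _ _ _ (HDc 1%nat x)).
      apply Derive_per. exact Hc1per. }
    set (mm := RInt (fun y => Dc 0%nat (y + s)) (-/2) (/2)).
    assert (Hm : is_RInt (fun y => Dc 0%nat (y + s)) (-/2) (/2) mm).
    { apply is_RInt_cont. intros x. auto_derive; auto. }
    assert (Hmuc : mu (Dc 0%nat) = mm).
    { apply (@is_RInt_unique R_CompleteNormedModule). apply (shift_window _ s); auto. }
    rewrite Hmuc.
    set (R0 := fun y => l * (12 * c / 13) * pp c y + (3 - l) / 2 * (12 * c / 13 * y) ^ 2).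
    set (I1 := RInt (fun y => P y * (mm - Dc 2%nat (y + s))) (-/2) (/2)).
    set (I2 := RInt (fun y => R0 y * Dc 0%nat (y + s)) (-/2) (/2)).
    assert (L1 : is_RInt (fun y => P y * (mm - Dc 2%nat (y + s))) (-/2) (/2) I1).
    { apply is_RInt_cont. intros x. unfold P, pp. auto_derive; auto. }
    assert (L2 : is_RInt (fun y => R0 y * Dc 0%nat (y + s)) (-/2) (/2) I2).
    { apply is_RInt_cont. intros x. unfold R0, pp. auto_derive; auto. }
    assert (HI : I1 = I2).
    { set (dP := fun y => c * (12*c/13*y) - pp c y * (12*c/13*y)).
      set (Bf := fun y => dP y * Dc 0%nat (y+s) - P y * Dc 1%nat (y+s)).
      set (ddP := fun y => c*(12*c/13) - (12*c/13*y)^2 - pp c y * (12*c/13)).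
      set (dB := fun y => ddP y * Dc 0%nat (y+s) - P y * Dc 2%nat (y+s)).
      assert (Z2 : is_RInt dB (-/2) (/2) (Bf (/2) - Bf (-/2))).
      { apply is_RInt_FTC.
        - intros x. unfold Bf, dB, ddP, dP, P, pp. auto_derive; auto.
          rewrite !(fun n z => is_derive_unique _ _ _ (HDc n z)). unfold Kc. field.
        - apply cont_of_der. intros x. unfold dB, ddP, P, pp. auto_derive; auto. }
      assert (Z1 : is_RInt (fun y => P y * mm - A * Dc 0%nat (y + s)) (-/2) (/2) 0).
      { assert (X := is_RInt_minus _ _ _ _ _ _ (is_RInt_scal _ _ _ mm _ HPint) (is_RInt_scal _ _ _ A _ Hm)).
        replace 0 with (minus (scal mm A) (scal A mm)).
        eapply is_RInt_ext; [|exact X]. intros y _. unfold minus, plus, opp, scal; simpl; unfold mult; simpl. ring.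
        unfold minus, plus, opp, scal; simpl; unfold mult; simpl. ring. }
      assert (Hbd : Bf (/2) - Bf (-/2) = 0).
      { unfold Bf, dP, P, pp. replace (/2 + s) with ((-/2 + s) + 1) by field. rewrite Hc1per. field. }
      rewrite Hbd in Z2.
      assert (Z := is_RInt_plus _ _ _ _ _ _ Z1 Z2).
      assert (Y := is_RInt_minus _ _ _ _ _ _ L1 L2).
      assert (E : minus I1 I2 = plus 0 0).
      { eapply is_RInt_uniq. exact Y. eapply is_RInt_ext; [|exact Z]. intros y _.
        unfold minus, plus, opp; simpl. unfold dB, ddP, P, R0, A, pp, Kc. field. }
      unfold minus, plus, opp in E; simpl in E. lra. }
    assert (G1 : is_RInt (fun x => (c * phi (x - s) - phi (x - s) ^ 2 / 2 + Kc c l) *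
                          (mm - Derive_n (Dc 0%nat) 2 x)) 0 1 I1).
    { apply (shift_window _ s).
      - intros x. rewrite !HDn2, Hperu, Hc2per. reflexivity.
      - eapply is_RInt_ext; [|exact L1]. intros y Hy.
        rewrite Rmin_left in Hy by lra. rewrite Rmax_right in Hy by lra.
        rewrite Hphi by lra. rewrite HDn2. reflexivity. }
    assert (G2 : is_RInt (fun x => (l * (12 * c / 13) * phi (x - s) + (3 - l) / 2 *
                     (ux (fun t x => phi (x - c * t)) t x) ^ 2) * Dc 0%nat x) 0 1 I2).
    { apply (shift_window _ s).
      - intros x. unfold ux. rewrite (Derive_per _ x).
        + rewrite Hperu, Hchi. reflexivity.
        + intros y. cbv beta. replace (y + 1 - c * t) with ((y - c * t) + 1) by ring. apply Hper.
      - eapply is_RInt_ext; [|exact L2]. intros y Hy.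
        rewrite Rmin_left in Hy by lra. rewrite Rmax_right in Hy by lra.
        assert (Hux : ux (fun t x => phi (x - c * t)) t (y + s) = 12 * c / 13 * y)
          by (apply ux_win; auto; lra).
        rewrite Hux. rewrite Hphi by lra. reflexivity. }
    split; [exists I1; exact G1|]. split; [exists I2; exact G2|].
    rewrite (@is_RInt_unique R_CompleteNormedModule _ _ _ _ G1).
    rewrite (@is_RInt_unique R_CompleteNormedModule _ _ _ _ G2). exact HI.
Qed.


Lemma weak_part (c l : R) (phi : R -> R) :
  (forall x, phi (x + 1) = phi x) ->
  (forall x, -/2 <= x <= /2 -> phi x = c / 26 * (12 * x ^ 2 + 23)) ->
  forall (psi : R -> R -> R) (T : R), test_fun psi T ->
      let integrand t x :=
        - phi (x - c * t) * Derive (fun s => psi s x) t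
        + phi (x - c * t) * ux (fun t x => phi (x - c * t)) t x * psi t x
        - (c * phi (x - c * t) - phi (x - c * t) ^ 2 / 2 + Kc c l) * Derive (fun y => psi t y) x in
      (forall t, ex_RInt (fun x => integrand t x) 0 1) /\
      ex_RInt (fun t => RInt (fun x => integrand t x) 0 1) (- T) T /\
      RInt (fun t => RInt (fun x => integrand t x) 0 1) (- T) T = 0.
Proof.
  intros Hper Hwin psi T [[D [HD0 [HDt [HDx HDc]]]] [Hpsip Hsupp]] integrand.
  subst psi.
  assert (Hder_t : forall t x, Derive (fun s => D 0%nat 0%nat s x) t = D 1%nat 0%nat t x).
  { intros; apply is_derive_unique; apply HDt. }
  assert (Hder_x : forall t x, Derive (fun y => D 0%nat 0%nat t y) x = D 0%nat 1%nat t x).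
  { intros; apply is_derive_unique; apply HDx. }
  assert (Hexx : forall i j t x, ex_derive (fun y => D i j t y) x) by (intros; eexists; apply HDx).
  set (Hd := fun t => RInt (fun y => pp c y * (D 1%nat 0%nat t (y + c * t) + c * D 0%nat 1%nat t (y + c * t))) (-/2) (/2)).
  assert (Key : forall t, is_RInt (fun x => integrand t x) 0 1 (- Hd t)).
  { intros t. apply (shift_window _ (c * t)).
    - intros x. unfold integrand.
      rewrite (Derive_ext (fun s0 => D 0%nat 0%nat s0 (x+1)) (fun s0 => D 0%nat 0%nat s0 x)) by (intros; apply Hpsip).
      rewrite (Derive_per (fun y => D 0%nat 0%nat t y) x) by (intros; apply Hpsip).
      unfold ux. rewrite (Derive_per _ x) by (intros y; cbv beta; replace (y+1-c*t) with ((y-c*t)+1) by ring; apply Hper).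
      replace (x + 1 - c*t) with ((x - c*t)+1) by ring. rewrite Hper, Hpsip. reflexivity.
    - set (W := fun y => (pp c y ^ 2 / 2 - Kc c l) * D 0%nat 0%nat t (y + c*t)).
      set (dW := fun y => pp c y * (12*c/13*y) * D 0%nat 0%nat t (y + c*t) + (pp c y ^2/2 - Kc c l) * D 0%nat 1%nat t (y + c*t)).
      assert (ZW : is_RInt dW (-/2) (/2) (W (/2) - W (-/2))).
      { apply is_RInt_FTC.
        - intros x. unfold W, dW, pp. auto_derive.
          + repeat split; auto; apply Hexx.
          + rewrite Hder_x. field.
        - apply cont_of_der. intros x. unfold dW, pp. auto_derive; repeat split; auto; apply Hexx. }
      assert (HW : W (/2) - W (-/2) = 0).
      { unfold W, pp. replace (/2 + c*t) with ((-/2 + c*t) + 1) by field. rewrite Hpsip. field. }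
      rewrite HW in ZW.
      assert (Hh : is_RInt (fun y => pp c y * (D 1%nat 0%nat t (y + c*t) + c * D 0%nat 1%nat t (y + c*t))) (-/2) (/2) (Hd t)).
      { apply is_RInt_cont. intros x. unfold pp. auto_derive; repeat split; auto; apply Hexx. }
      assert (X := is_RInt_minus _ _ _ _ _ _ ZW Hh).
      replace (- Hd t) with (minus 0 (Hd t)) by (unfold minus, plus, opp; simpl; ring).
      eapply is_RInt_ext; [|exact X]. intros y Hy.
      rewrite Rmin_left in Hy by lra. rewrite Rmax_right in Hy by lra.
      unfold integrand; cbv beta. rewrite Hder_t, Hder_x.
      rewrite ux_win by (auto; lra).
      replace (y + c*t - c*t) with y by ring. rewrite Hwin by lra.
      unfold minus, plus, opp; simpl. unfold dW, pp, Kc. field. }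
  set (H := fun u => RInt (fun y => pp c y * D 0%nat 0%nat u (y + c * u)) (-/2) (/2)).
  assert (Hpc : forall y, continuous (pp c) y).
  { apply cont_of_der. intros; unfold pp; auto_derive; auto. }
  assert (HdH : forall x, is_derive H x (Hd x)).
  { intros x. exact (param (D 0%nat 0%nat) (D 1%nat 0%nat) (D 0%nat 1%nat) (pp c) c (-/2) (/2)
       (HDt 0%nat 0%nat) (HDx 0%nat 0%nat) (HDc 1%nat 0%nat) (HDc 0%nat 1%nat) Hpc x). }
  assert (HdHd : forall x, ex_derive Hd x).
  { intros x. eexists.
    assert (G1 : forall t z, is_derive (fun s => D 1%nat 0%nat s z + c * D 0%nat 1%nat s z) t
                   (D 2%nat 0%nat t z + c * D 1%nat 1%nat t z)).
    { intros t z. apply (is_derive_plus (fun s => D 1%nat 0%nat s z) (fun s => c * D 0%nat 1%nat s z)).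
      apply HDt. apply is_derive_scal. apply HDt. }
    assert (G2 : forall t z, is_derive (fun s => D 1%nat 0%nat t s + c * D 0%nat 1%nat t s) z
                   (D 1%nat 1%nat t z + c * D 0%nat 2%nat t z)).
    { intros t z. apply (is_derive_plus (fun s => D 1%nat 0%nat t s) (fun s => c * D 0%nat 1%nat t s)).
      apply HDx. apply is_derive_scal. apply HDx. }
    assert (C1 : forall p, continuous (fun q : R * R => D 2%nat 0%nat (fst q) (snd q) + c * D 1%nat 1%nat (fst q) (snd q)) p).
    { intros p. apply (continuous_plus (fun q : R * R => D 2%nat 0%nat (fst q) (snd q)) (fun q : R*R => c * D 1%nat 1%nat (fst q) (snd q))).
      apply HDc. apply (continuous_mult (fun _ : R*R => c) (fun q : R*R => D 1%nat 1%nat (fst q) (snd q))).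
      apply continuous_const. apply HDc. }
    assert (C2 : forall p, continuous (fun q : R * R => D 1%nat 1%nat (fst q) (snd q) + c * D 0%nat 2%nat (fst q) (snd q)) p).
    { intros p. apply (continuous_plus (fun q : R * R => D 1%nat 1%nat (fst q) (snd q)) (fun q : R*R => c * D 0%nat 2%nat (fst q) (snd q))).
      apply HDc. apply (continuous_mult (fun _ : R*R => c) (fun q : R*R => D 0%nat 2%nat (fst q) (snd q))).
      apply continuous_const. apply HDc. }
    exact (param (fun u z => D 1%nat 0%nat u z + c * D 0%nat 1%nat u z)
                 (fun u z => D 2%nat 0%nat u z + c * D 1%nat 1%nat u z)
                 (fun u z => D 1%nat 1%nat u z + c * D 0%nat 2%nat u z) (pp c) c (-/2) (/2)
       G1 G2 C1 C2 Hpc x). }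
  assert (Hzero : forall s z, T <= Rabs s -> D 0%nat 0%nat s z = 0).
  { intros s z Hs. apply (zero_edge (fun s => D 0%nat 0%nat s z) T s); auto.
    apply cont_of_der. intros; eexists; apply HDt. }
  assert (HT : forall s, T <= Rabs s -> H s = 0).
  { intros s Hs. unfold H. apply (@is_RInt_unique R_CompleteNormedModule).
    replace 0 with (scal (/2 - -/2) (0:R)) by (unfold scal; simpl; unfold mult; simpl; ring).
    eapply is_RInt_ext; [|apply (@is_RInt_const R_NormedModule)].
    intros y _. cbv beta. rewrite Hzero by auto. rewrite Rmult_0_r. reflexivity. }
  assert (HI := is_RInt_FTC H Hd (-T) T HdH (cont_of_der Hd HdHd)).
  rewrite (HT T), (HT (-T)) in HI by (rewrite ?Rabs_Ropp; apply Rle_abs).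
  assert (HI' : is_RInt (fun t => RInt (fun x => integrand t x) 0 1) (-T) T 0).
  { assert (HI2 := is_RInt_opp _ _ _ _ HI).
    change (opp (0 - 0)) with (-(0-0)) in HI2. replace (-(0-0)) with 0 in HI2 by ring.
    eapply is_RInt_ext; [|apply HI2].
    intros t _. symmetry. apply (@is_RInt_unique R_CompleteNormedModule). exact (Key t). }
  split; [intros t; eexists; apply Key|].
  split; [eexists; exact HI'|].
  apply (@is_RInt_unique R_CompleteNormedModule). exact HI'.
Qed.


Theorem theorem6p1 (c : R) (lam : Z) (phi : R -> R) :
  lam <> 0%Z -> lam <> 1%Z ->
  (forall x, phi (x + 1) = phi x) ->
  (forall x, -/2 <= x <= /2 -> phi x = c / 26 * (12 * x ^ 2 + 23)) ->
  weak_solution (IZR lam) (fun t x => phi (x - c * t)).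
Proof.
  intros _ _ Hper Hwin. split.
  - intros t x. replace (x + 1 - c * t) with ((x - c * t) + 1) by ring. apply Hper.
  - exists (fun t x => c * phi (x - c * t) - phi (x - c * t) ^ 2 / 2 + Kc c (IZR lam)).
    split.
    + intros t. exact (lambda_part c (IZR lam) t phi Hper Hwin).
    + intros psi T Htest. exact (weak_part c (IZR lam) phi Hper Hwin psi T Htest).
Qed.
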